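(* Let $\mathcal D$ be a distribution of $(x,y)\in\mathbb R^d\times\{-1,+1\}$ with $x$ having finite second moments, let $\lambda>0$, and let $w^*=(w_1^*,\dots,w_d^* )$ be a minimizer of $\mathcal L(w)=\mathbb E_{(x,y)\sim\mathcal D}[\max(0,1-yw^\top x)]+\frac{\lambda}{2}\|w\|_2^2$. Suppose that the coordinates of $x$ are mutually independent conditionally on $y$. If a coordinate $i$ satisfies $\mathbb E[x_i\mid y=-1]\le 0\le \mathbb E[x_i\mid y=1]$, then $w_i^*\ge 0$. If instead $\mathbb E[x_i\mid y=1]\le 0\le \mathbb E[x_i\mid y=-1]$, then $w_i^*\le 0$. *)

(* Defs.v *)
From HB Require Import structures.
From mathcomp Require Import all_boot all_order all_algebra.
From mathcomp Require Import all_classical all_reals all_analysis.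
Set Implicit Arguments. Unset Strict Implicit. Unset Printing Implicit Defensive.
Import Order.TTheory GRing.Theory Num.Theory.
Local Open Scope classical_set_scope.
Local Open Scope ring_scope.

Definition evY {T : Type} {R : realType} (Y : T -> R) (c : R) : set T :=
  [set t | Y t = c].

Definition cond_prob {dT : measure_display} {T : measurableType dT} {R : realType}
  (P : probability T R) (Y : T -> R) (c : R) (A : set T) : R :=
  fine (P (A `&` evY Y c)) / fine (P (evY Y c)).

Definition cond_exp {dT : measure_display} {T : measurableType dT} {R : realType}
  (P : probability T R) (Z : T -> R) (Y : T -> R) (c : R) : R :=
  fine (\int[P]_(t in evY Y c) (Z t)%:E) / fine (P (evY Y c)).

(* The coordinates X_0, ..., X_{d-1} are mutually independent conditionally
   on Y = c: product rule for every family of measurable sets (taking B i = setT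
   gives the product rule for every subfamily). *)
Definition cond_mutually_independent {dT : measure_display} {T : measurableType dT}
  {R : realType} (P : probability T R) (d : nat) (X : 'I_d -> T -> R)
  (Y : T -> R) (c : R) : Prop :=
  forall B : 'I_d -> set R, (forall i, measurable (B i)) ->
    cond_prob P Y c (\bigcap_(i in [set: 'I_d]) (X i @^-1` B i)) =
    \prod_(i < d) cond_prob P Y c (X i @^-1` B i).

Definition hinge_objective {dT : measure_display} {T : measurableType dT}
  {R : realType} (P : probability T R) (d : nat) (X : 'I_d -> T -> R)
  (Y : T -> R) (lambda : R) (w : 'I_d -> R) : \bar R :=
  (\int[P]_t (Num.max 0 (1 - Y t * \sum_(i < d) w i * X i t))%:E
   + (lambda / 2 * \sum_(i < d) w i ^+ 2)%:E)%E.

(* Main.v *)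
Require Import Defs.
From HB Require Import structures.
From mathcomp Require Import all_boot all_order all_algebra.
From mathcomp Require Import all_classical all_reals all_analysis.
From mathcomp Require Import measurable_realfun.
Import Order.TTheory GRing.Theory Num.Theory.
Local Open Scope classical_set_scope.
Local Open Scope ring_scope.
From mathcomp Require Import ring lra.
Section PartC.
Local Open Scope ereal_scope.
Context (R : realType) (dT : measure_display) (T : measurableType dT)
  (P : probability T R).

Lemma restr_integral (E : set T) (mE : measurable E) (h : T -> \bar R) :
  measurable_fun setT h -> (forall x, 0 <= h x) ->
  \int[mrestr P mE]_x h x = \int[P]_(x in E) h x.
Proof.
move=> mh h0.
rewrite -(setUv E) ge0_integral_setU //; last 3 first.
- exact: measurableC.
- by rewrite setUv.
- by rewrite disj_set2E setICr.
rewrite (@eq_measure_integral _ _ _ E P); last first.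
  by move=> A mA AE; change (P (A `&` E) = P A); rewrite setIidl.
rewrite (@eq_measure_integral _ _ _ (~` E) mzero); last first.
  move=> A mA AE; change (P (A `&` E) = 0).
  have -> : A `&` E = set0.
    by apply/seteqP; split => x //= [/AE + ?].
  exact: measure0.
by rewrite integral_measure_zero adde0.
Qed.

Lemma push_eq (Z : T -> R) (mZ : measurable_fun setT Z) (E F : set T)
  (mE : measurable E) (mF : measurable F)
  (hEF : forall B, measurable B ->
     P (Z @^-1` B `&` E) * P F = P (Z @^-1` B `&` F) * P E)
  (g : R -> \bar R) (mg : measurable_fun setT g) (g0 : forall x, 0 <= g x) :
  (\int[P]_(x in E) g (Z x)) * P F = (\int[P]_(x in F) g (Z x)) * P E.
Proof.
have PFE : P F = (fine (P F))%:E by rewrite fineK // fin_num_measure.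
have PEE : P E = (fine (P E))%:E by rewrite fineK // fin_num_measure.
pose kF : {nonneg R} := NngNum (fine_ge0 (measure_ge0 P F)).
pose kE : {nonneg R} := NngNum (fine_ge0 (measure_ge0 P E)).
pose m1 := @measure_function_pushforward__canonical__measure_function_Measure
  _ _ _ _ _ (mscale kF (mrestr P mE)) Z mZ.
pose m2 := @measure_function_pushforward__canonical__measure_function_Measure
  _ _ _ _ _ (mscale kE (mrestr P mF)) Z mZ.
have e12 : \int[m1]_x g x = \int[m2]_x g x.
  apply: eq_measure_integral => A mA _.
  rewrite /= /pushforward /mscale /mrestr /= -PFE -PEE.
  by rewrite muleC hEF // muleC.
have mgZ : measurable_fun setT (g \o Z) by exact: measurableT_comp.
have gZ0 : forall x, 0 <= (g \o Z) x by move=> x; exact: g0.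
move: e12.
rewrite /m1 /m2 /= !ge0_integral_pushforward //.
rewrite preimage_setT !ge0_integral_mscale //.
rewrite !restr_integral //= => e.
by rewrite PFE PEE muleC e muleC.
Qed.

Lemma push_eq_signed (Z : T -> R) (mZ : measurable_fun setT Z) (E F : set T)
  (mE : measurable E) (mF : measurable F)
  (hEF : forall B, measurable B ->
     P (Z @^-1` B `&` E) * P F = P (Z @^-1` B `&` F) * P E)
  (iZ : P.-integrable setT (EFin \o Z)) :
  (\int[P]_(x in E) (Z x)%:E) * P F = (\int[P]_(x in F) (Z x)%:E) * P E.
Proof.
have mE' : measurable_fun setT (@EFin R) by exact/measurable_EFinP.
have hp := @push_eq Z mZ E F mE mF hEF _ (measurable_funepos mE') (fun x => funepos_ge0 _ x).
have hn := @push_eq Z mZ E F mE mF hEF _ (measurable_funeneg mE') (fun x => funeneg_ge0 _ x).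
have iE : P.-integrable E (EFin \o Z) by exact: integrableS iZ.
have iF : P.-integrable F (EFin \o Z) by exact: integrableS iZ.
have fp D : measurable D -> P.-integrable D (EFin \o Z) ->
  \int[P]_(x in D) (EFin \o Z)^\+ x \is a fin_num.
  by move=> mD iD; apply: integrable_fin_num => //; exact: integrable_funepos.
have fn D : measurable D -> P.-integrable D (EFin \o Z) ->
  \int[P]_(x in D) (EFin \o Z)^\- x \is a fin_num.
  by move=> mD iD; apply: integrable_fin_num => //; exact: integrable_funeneg.
have fE1 := fp E mE iE. have fE2 := fn E mE iE.
have fF1 := fp F mF iF. have fF2 := fn F mF iF.
rewrite (integralE _ _ (EFin \o Z)) (integralE _ _ (EFin \o Z)).
rewrite muleBl ?fin_num_measure //; last by apply: fin_num_adde_defl; rewrite fin_numN.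
rewrite [RHS]muleBl ?fin_num_measure //; last by apply: fin_num_adde_defl; rewrite fin_numN.
by rewrite funepos_comp funeneg_comp; congr (_ - _); [exact: hp | exact: hn].
Qed.
End PartC.

Section PartA.
Local Open Scope ereal_scope.
Context (R : realType) (dT : measure_display) (T : measurableType dT)
  (P : probability T R) (d : nat) (X : 'I_d -> T -> R) (Y : T -> R)
  (hX : forall i, measurable_fun setT (X i)) (hY : measurable_fun setT Y)
  (i : 'I_d) (c : R) (hpos : 0 < P (evY Y c))
  (hind : cond_mutually_independent P X Y c).

Let Fc := evY Y c.
Lemma mFc : measurable Fc.
Proof.
have := hY measurableT _ (measurable_set1 c); rewrite setTI.
by congr measurable; apply/seteqP; split => t.
Qed.

Definition Gen : set (set T) := [set C | exists B : 'I_d -> set R,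
  [/\ forall j, measurable (B j), B i = setT &
      C = \bigcap_(j in [set: 'I_d]) X j @^-1` B j]].

Definition rel (C : set T) := forall B, measurable B ->
  P (X i @^-1` B `&` C `&` Fc) * P Fc = P (X i @^-1` B `&` Fc) * P (C `&` Fc).

Lemma PE (A : set T) : measurable A -> P A = (fine (P A))%:E.
Proof. by move=> mA; rewrite fineK // fin_num_measure. Qed.

Lemma gen_rel C : Gen C -> rel C.
Proof.
move=> [B [mB Bi ->]] B0 mB0.
pose B' j := if j == i then B0 else B j.
have e1 : \bigcap_(j in [set: 'I_d]) X j @^-1` B' j =
    X i @^-1` B0 `&` \bigcap_(j in [set: 'I_d]) X j @^-1` B j.
  apply/seteqP; split => t /=.
    move=> h; split; first by have := h i I; rewrite /B' eqxx.
    move=> j _; have := h j I; rewrite /B'; case: eqP => [->|//].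
    by rewrite Bi.
  move=> [h1 h2] j _; rewrite /B'; case: eqP => [->//|_]; exact: h2.
have mB' j : measurable (B' j) by rewrite /B'; case: eqP.
have h1 := hind B' mB'.
have h2 := hind B mB.
rewrite e1 /cond_prob in h1.
rewrite /cond_prob in h2.
set p0 := fine (P (evY Y c)) in h1 h2.
have p0n : (p0 != 0)%R.
  rewrite /p0; apply: lt0r_neq0; rewrite fine_gt0 // hpos /=.
  by rewrite ltey_eq fin_num_measure //; exact: mFc.
rewrite (bigD1 i) //= in h1; rewrite (bigD1 i) //= in h2.
rewrite /B' eqxx in h1.
rewrite (eq_bigr (fun j => fine (P (X j @^-1` B j `&` evY Y c)) / p0)%R) in h1;
  last by move=> j /negbTE ji; rewrite /B' ji.
rewrite Bi preimage_setT setTI divff // mul1r in h2.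
rewrite -h2 in h1.
have mC : measurable (\bigcap_(j in [set: 'I_d]) X j @^-1` B j).
  apply: fin_bigcap_measurable; first exact: finite_finset.
  by move=> j _; rewrite -[X in measurable X]setTI; exact: hX.
have mXB : measurable (X i @^-1` B0) by rewrite -[X in measurable X]setTI; exact: hX.
have mF := mFc.
set C0 := \bigcap_(j in [set: 'I_d]) X j @^-1` B j in h1 mC *.
have mS1 : measurable (X i @^-1` B0 `&` C0 `&` Fc).
  by apply: measurableI => //; exact: measurableI.
have mS2 : measurable (X i @^-1` B0 `&` Fc) by exact: measurableI.
have mS3 : measurable (C0 `&` Fc) by exact: measurableI.
have key : (fine (P (X i @^-1` B0 `&` C0 `&` Fc)) * p0 =
    fine (P (X i @^-1` B0 `&` Fc)) * fine (P (C0 `&` Fc)))%R.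
  move: h1; rewrite /Fc.
  set a := fine _; set b := fine _; set e := fine _ => h1.
  have -> : a = (b * e / p0)%R by rewrite -[a](@divfK _ p0) // h1; field.
  by field.
by rewrite (PE _ mS1) (PE _ mF) (PE _ mS2) (PE _ mS3) -!EFinM key.
Qed.
Lemma rel_lambda : lambda_system setT [set C | measurable C /\ rel C].
Proof.
have mF := mFc.
have fin A : measurable A -> P A < +oo.
  by move=> mA; rewrite ltey_eq fin_num_measure.
split.
- by move=> A _ t.
- split; first exact: measurableT.
  by move=> B mB; rewrite setIT setTI.
- move=> A B BA [mA rA] [mB rB]; split; first exact: measurableD.
  move=> Z mZ.
  have mXZ : measurable (X i @^-1` Z) by rewrite -[X in measurable X]setTI; exact: hX.
  have e1 : X i @^-1` Z `&` (A `\` B) `&` Fc =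
      (X i @^-1` Z `&` A `&` Fc) `\` (X i @^-1` Z `&` B `&` Fc).
    apply/seteqP; split => t /=.
      by move=> [[h1 [h2 h3]] h4]; split => // -[[_ ?] _].
    by move=> [[[h1 h2] h4] h3]; split => //; split => //; split => // hB; apply: h3.
  have e2 : (A `\` B) `&` Fc = (A `&` Fc) `\` (B `&` Fc).
    apply/seteqP; split => t /=.
      by move=> [[h2 h3] h4]; split => // -[? _].
    by move=> [[h2 h4] h3]; split => //; split => // hB; apply: h3.
  have mXA : measurable (X i @^-1` Z `&` A `&` Fc).
    by apply: measurableI => //; exact: measurableI.
  have mXB : measurable (X i @^-1` Z `&` B `&` Fc).
    by apply: measurableI => //; exact: measurableI.
  rewrite e1 e2 !measureD //; last 4 first.
  + exact: measurableI.
  + exact: measurableI.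
  + by apply: fin; exact: measurableI.
  + exact: fin.
  rewrite (setIidr (_ : X i @^-1` Z `&` B `&` Fc `<=` X i @^-1` Z `&` A `&` Fc)); last first.
      by move=> t [[? ?] ?]; split => //; split => //; exact: BA.
    rewrite (setIidr (_ : B `&` Fc `<=` A `&` Fc)); last first.
      by move=> t [? ?]; split => //; exact: BA.
    rewrite muleBl ?fin_num_measure //; last first.
      by apply: fin_num_adde_defl; rewrite fin_numN fin_num_measure.
    have fXF : P (X i @^-1` Z `&` Fc) \is a fin_num.
      by rewrite fin_num_measure //; exact: measurableI.
    rewrite muleBr //; last first.
      by apply: fin_num_adde_defl; rewrite fin_numN fin_num_measure //; exact: measurableI.
    by rewrite rA // rB.
- move=> F ndF hF; split.
    by apply: bigcupT_measurable => n; have [] := hF n.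
  move=> Z mZ.
  have mXZ : measurable (X i @^-1` Z) by rewrite -[X in measurable X]setTI; exact: hX.
  pose F1 n := X i @^-1` Z `&` F n `&` Fc.
  pose F2 n := F n `&` Fc.
  have mF1 n : measurable (F1 n).
    by apply: measurableI => //; apply: measurableI => //; have [] := hF n.
  have mF2 n : measurable (F2 n).
    by apply: measurableI => //; have [] := hF n.
  have U1 : \bigcup_n F1 n = X i @^-1` Z `&` \bigcup_n F n `&` Fc.
    by rewrite /F1 -setI_bigcupl -setI_bigcupr.
  have U2 : \bigcup_n F2 n = \bigcup_n F n `&` Fc.
    by rewrite /F2 -setI_bigcupl.
  have nd1 : {homo F1 : n m / (n <= m)%N >-> (n <= m)%O}.
    move=> n m nm; apply/subsetPset => t [[? ?] ?]; split => //; split => //.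
    by move/subsetPset : (ndF n m nm); apply.
  have nd2 : {homo F2 : n m / (n <= m)%N >-> (n <= m)%O}.
    move=> n m nm; apply/subsetPset => t [? ?]; split => //.
    by move/subsetPset : (ndF n m nm); apply.
  have c1 := @nondecreasing_cvg_mu _ _ _ P F1 mF1 (bigcupT_measurable F1 mF1) nd1.
  have c2 := @nondecreasing_cvg_mu _ _ _ P F2 mF2 (bigcupT_measurable F2 mF2) nd2.
  rewrite U1 in c1; rewrite U2 in c2.
  have fP1 : P Fc \is a fin_num by rewrite fin_num_measure.
  have fP2 : P (X i @^-1` Z `&` Fc) \is a fin_num.
    by rewrite fin_num_measure //; exact: measurableI.
  have c1' := cvgeZr fP1 c1.
  have c2' := cvgeZl fP2 c2.
  have eq12 : (fun n => (P \o F1) n * P Fc) = (fun n => P (X i @^-1` Z `&` Fc) * (P \o F2) n).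
    apply/funext => n /=; rewrite /F1 /F2; have [_ ->] := hF n; done.
  rewrite eq12 in c1'.
  exact: (cvg_unique (@ereal_hausdorff R) c1' c2').
Qed.
Lemma gen_setI : setI_closed Gen.
Proof.
move=> A B [BA [mBA BAi ->]] [BB [mBB BBi ->]].
exists (fun j => BA j `&` BB j); split.
- by move=> j; exact: measurableI.
- by rewrite BAi BBi setIT.
- apply/seteqP; split => t /=.
    by move=> [h1 h2] j _; split; [exact: h1|exact: h2].
  by move=> h; split => j _; have [] := h j I.
Qed.

Lemma gen_meas C : Gen C -> measurable C.
Proof.
move=> [B [mB _ ->]]; apply: fin_bigcap_measurable; first exact: finite_finset.
by move=> j _; rewrite -[X in measurable X]setTI; exact: hX.
Qed.

Lemma sigma_rel C : <<s Gen >> C -> measurable C /\ rel C.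
Proof.
move=> hC.
have GH : Gen `<=` [set C | measurable C /\ rel C].
  by move=> C0 gC0; split; [exact: gen_meas|exact: gen_rel].
have sub := @lambda_system_subset T Gen gen_setI setT _ rel_lambda GH
  (fun _ _ _ _ => I).
exact: (sub C hC).
Qed.

Lemma ac_sigma (w : 'I_d -> R) (c' : R) :
  <<s Gen >> [set t | (0 < 1 - c' * \sum_(j < d) (if j != i then w j * X j t else 0))%R].
Proof.
pose TT := g_sigma_algebraType Gen.
have mXj j : j != i -> measurable_fun (setT : set TT) (X j : TT -> R).
  move=> ji _ B mB; rewrite setTI; apply: sub_gen_smallest.
  exists (fun k => if k == j then B else setT); split.
  - by move=> k; case: eqP.
  - by rewrite eq_sym (negbTE ji).
  - apply/seteqP; split => t /=.
      by move=> h k _; case: eqP => [->//|].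
    by move=> h; have := h j I; rewrite eqxx.
have mS : measurable_fun (setT : set TT)
    (fun t : TT => \sum_(j < d) (if j != i then w j * X j t else 0))%R.
  apply: measurable_sum => j; case: (boolP (j != i)) => ji.
    exact: measurable_funM (measurable_cst _) (mXj _ ji).
  exact: measurable_cst.
have mf : measurable_fun (setT : set TT)
   (fun t : TT => 1 - c' * \sum_(j < d) (if j != i then w j * X j t else 0))%R.
  apply: measurable_funB; first exact: measurable_cst.
  exact: measurable_funM (measurable_cst _) mS.
have := mf measurableT _ (measurable_itv `]0%R, +oo[).
rewrite setTI; congr (<<s Gen >>); apply/seteqP; split => t /=;
  by rewrite in_itv /= andbT.
Qed.
Definition hinge (v : 'I_d -> R) t :=
  Num.max 0%R (1 - Y t * \sum_(j < d) v j * X j t)%R.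

Lemma perc (w : 'I_d -> R)
  (hint : \int[P]_t (hinge w t)%:E < +oo)
  (hXi : P.-integrable setT (EFin \o X i))
  (hs : (c * w i * cond_exp P (X i) Y c <= 0)%R) :
  \int[P]_(t in Fc) (hinge (fun j => if j == i then 0%R else w j) t)%:E
  <= \int[P]_(t in Fc) (hinge w t)%:E.
Proof.
set w0 := fun j => if j == i then 0%R else w j.
set S0 := fun t => (\sum_(j < d) (if j != i then w j * X j t else 0))%R.
pose Ac := [set t | (0 < 1 - c * S0 t)%R].
have [mAc rAc] := @sigma_rel Ac (ac_sigma w c).
have mF := mFc.
have hmeas v : measurable_fun setT (fun t => (hinge v t)%:E).
  apply/measurable_EFinP; apply: measurable_maxr; first exact: measurable_cst.
  apply: measurable_funB; first exact: measurable_cst.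
  apply: measurable_funM => //; apply: measurable_sum => j.
  by apply: measurable_funM => //; exact: measurable_cst.
have hge0 v t : (0 <= hinge v t)%R by rewrite /hinge le_max lexx.
have f1 t : (\sum_(j < d) w j * X j t = w i * X i t + S0 t)%R.
  by rewrite (bigD1 i) //= big_mkcond.
have f2 t : (\sum_(j < d) w0 j * X j t = S0 t)%R.
  by apply: eq_bigr => j _; rewrite /w0; case: eqP => _ /=; rewrite ?mul0r.
have iw : P.-integrable Fc (fun t => (hinge w t)%:E).
  apply/integrableP; split; first exact: measurable_funTS (hmeas w).
  under eq_integral do rewrite gee0_abs ?lee_fin //.
  apply: le_lt_trans hint; apply: ge0_subset_integral => //.
  by move=> t _; rewrite lee_fin.
pose g t := ((c * w i)%:E * (X i t)%:E).
have ig : P.-integrable Fc (g \_ Ac).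
  apply/integrable_restrict => //.
  apply: integrableS (measurableT) _ (subsetT _) _; first exact: measurableI.
  exact: integrableZl.
have pw : forall t, Fc t -> (hinge w0 t)%:E <= (hinge w t)%:E + (g \_ Ac) t.
  move=> t Fct; have Yt : Y t = c by exact: Fct.
  rewrite /hinge f1 f2 Yt /patch.
  have -> : (1 - c * (w i * X i t + S0 t) = (1 - c * S0 t) - c * w i * X i t)%R.
    by ring.
  case: (boolP (t \in Ac)) => tA.
    have u0 : (0 < 1 - c * S0 t)%R by move: tA; rewrite inE.
    rewrite /g -EFinM -EFinD lee_fin.
    set u := (1 - c * S0 t)%R in u0 *; set v := (c * w i * X i t)%R.
    rewrite (max_r (ltW u0)).
    have : (u - v <= Num.max 0 (u - v))%R by rewrite le_max lexx orbT.
    by lra.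
  rewrite adde0 lee_fin.
  have u0 : (1 - c * S0 t <= 0)%R.
    by rewrite leNgt; apply/negP => h; apply: (negP tA); rewrite inE.
  by rewrite max_l // le_max lexx.
have iD := integrableD mF iw ig.
have le1 : \int[P]_(t in Fc) (hinge w0 t)%:E <=
    \int[P]_(t in Fc) ((hinge w t)%:E + (g \_ Ac) t).
  apply: ge0_le_integral => //.
  - by move=> t _; rewrite lee_fin.
  - exact: measurable_funTS (hmeas w0).
  - exact: measurable_int iD.
apply: (le_trans le1).
rewrite integralD // -integral_mkcondl.
have mAF : measurable (Ac `&` Fc) by exact: measurableI.
rewrite /g integralZl //; last first.
  by apply: integrableS (measurableT) _ (subsetT _) _ => //.
apply: geeDl.
have hEF : forall B, measurable B ->
    P (X i @^-1` B `&` (Ac `&` Fc)) * P Fc = P (X i @^-1` B `&` Fc) * P (Ac `&` Fc).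
  by move=> B mB; rewrite setIA; exact: rAc.
have E1 := @push_eq_signed R dT T P (X i) (hX i) _ _ mAF mF hEF hXi.
have iAF : P.-integrable (Ac `&` Fc) (EFin \o X i).
  by apply: integrableS (measurableT) _ (subsetT _) _ => //.
have iFc : P.-integrable Fc (EFin \o X i).
  by apply: integrableS (measurableT) _ (subsetT _) _ => //.
have fa := integrable_fin_num mAF iAF.
have fb := integrable_fin_num mF iFc.
rewrite -(fineK fa) in E1 *; rewrite -(fineK fb) in E1.
rewrite (PE _ mF) (PE _ mAF) -!EFinM in E1.
case: E1 => E1.
rewrite -EFinM lee_fin.
move: hs; rewrite /cond_exp.
set a := fine _ in E1 *.
set b := fine (\int[P]_(x in Fc) _) in E1 *.
set pF := fine (P Fc) in E1 *.
set pA := fine (P (Ac `&` Fc)) in E1 *.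
change (fine (\int[P]_(t in evY Y c) (X i t)%:E)) with b.
change (fine (P (evY Y c))) with pF => hs.
have pF0 : (0 < pF)%R.
  rewrite /pF fine_gt0 // hpos /=.
  by rewrite ltey_eq fin_num_measure.
have pA0 : (0 <= pA)%R by apply: fine_ge0; exact: measure_ge0.
have -> : a = (b / pF * pA)%R.
  apply: (mulIf (lt0r_neq0 pF0)); rewrite E1; field; exact: lt0r_neq0.
by rewrite mulrA; apply: mulr_le0_ge0.
Qed.
End PartA.

Lemma one_neq_m1 (R : realFieldType) : (1 : R) <> -1.
Proof. move=> h; lra. Qed.

Theorem mainTheorem1 (R : realType) (dT : measure_display) (T : measurableType dT)
  (P : probability T R) (d : nat) (X : 'I_d -> T -> R) (Y : T -> R)
  (lambda : R) (wstar : 'I_d -> R)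
  (hX : forall i, measurable_fun setT (X i))
  (hY : measurable_fun setT Y)
  (hYpm : forall t, Y t = 1 \/ Y t = -1)
  (hpos1 : (0 < P (evY Y 1))%E) (hposm1 : (0 < P (evY Y (-1)))%E)
  (h2mom : forall i, P.-integrable setT (fun t => (X i t ^+ 2)%:E))
  (hlam : 0 < lambda)
  (hmin : forall w, (hinge_objective P X Y lambda wstar
                      <= hinge_objective P X Y lambda w)%E)
  (hind : forall c, (c = 1 \/ c = -1) -> cond_mutually_independent P X Y c)
  (i : 'I_d) :
  (cond_exp P (X i) Y (-1) <= 0 <= cond_exp P (X i) Y 1 -> 0 <= wstar i) /\
  (cond_exp P (X i) Y 1 <= 0 <= cond_exp P (X i) Y (-1) -> wstar i <= 0).
Proof.
have mF c : measurable (evY Y c) := @mFc R dT T Y hY c.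
have hXi : P.-integrable setT (EFin \o X i).
  apply: (@le_integrable _ _ _ P setT measurableT _
    (fun t => (EFin \o cst 1%R) t + (X i t ^+ 2)%:E)%E) => //.
  - by apply/measurable_EFinP; exact: hX.
  - move=> t _ /=; rewrite lee_fin.
    set x := X i t.
    rewrite (@ger0_norm _ (1 + x ^+ 2)); last by rewrite addr_ge0 // sqr_ge0.
    have [x0|x0] := leP 0 x; [rewrite ger0_norm // | rewrite ltr0_norm //]; nra.
  - apply: integrableD => //; first exact: finite_measure_integrable_cst.
pose Iw (v : 'I_d -> R) := (\int[P]_t (hinge R dT T d X Y v t)%:E)%E.
have Ige0 v : (0 <= Iw v)%E.
  by apply: integral_ge0 => t _; rewrite lee_fin /hinge le_max lexx.
have hint : (Iw wstar < +oo)%E.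
  have := hmin (fun _ => 0).
  have e1 t : Num.max 0 (1 - Y t * \sum_(j < d) (fun _ => 0 : R) j * X j t) = 1.
    rewrite big1 => [|j _]; last by rewrite mul0r.
    by rewrite mulr0 subr0 max_r.
  rewrite /hinge_objective.
  under [X in (_ <= X + _)%E]eq_integral do rewrite e1.
  have I1 : (\int[P]_t (cst (1%E : \bar R) t) = 1)%E.
    by rewrite integral_cst // mul1e; exact: probability_setT.
  rewrite I1.
  rewrite [X in (_ <= _ + (_ * X)%:E)%E]big1 => [|j _]; last by rewrite expr2 mul0r.
  rewrite mulr0 adde0 => h.
  apply: (le_lt_trans _ (ltry 1)).
  apply: le_trans h; apply: leeDl; rewrite lee_fin.
  apply: mulr_ge0; first by apply: divr_ge0 => //; exact: ltW.
  by apply: sumr_ge0 => j _; exact: sqr_ge0.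
have core : wstar i != 0 ->
    (forall c, c = 1 \/ c = -1 -> c * wstar i * cond_exp P (X i) Y c <= 0) ->
    False.
  move=> wne hs.
  set w0 := fun j => if j == i then 0 else wstar j.
  have dj : [disjoint evY Y 1 & evY Y (-1)].
    rewrite disj_set2E; apply/eqP/seteqP; split => // t [/= h1 h2].
    have e : Y t = 1 := h1. have e2 : Y t = -1 := h2. rewrite e in e2.
    exact: (@one_neq_m1 R e2).
  have eT : [set: T] = evY Y 1 `|` evY Y (-1).
    by apply/seteqP; split => // t _; case: (hYpm t) => h; [left|right].
  have hm v : measurable_fun setT (fun t => (hinge R dT T d X Y v t)%:E).
    apply/measurable_EFinP; apply: measurable_maxr; first exact: measurable_cst.
    apply: measurable_funB; first exact: measurable_cst.
    apply: measurable_funM => //; apply: measurable_sum => j.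
    by apply: measurable_funM => //; exact: measurable_cst.
  have hg v t : (0 <= (hinge R dT T d X Y v t)%:E)%E.
    by rewrite lee_fin /hinge le_max lexx.
  have split v : Iw v = (\int[P]_(t in evY Y 1) (hinge R dT T d X Y v t)%:E +
                       \int[P]_(t in evY Y (-1)) (hinge R dT T d X Y v t)%:E)%E.
    rewrite /Iw eT ge0_integral_setU //; rewrite -eT; exact: hm.

  have le0 : (Iw w0 <= Iw wstar)%E.
    rewrite !split; apply: leeD.
      apply: (@perc R dT T P d X Y hX hY i 1 hpos1 (hind 1 (or_introl erefl))
                wstar hint hXi (hs 1 (or_introl erefl))).
    apply: (@perc R dT T P d X Y hX hY i (-1) hposm1 (hind (-1) (or_intror erefl))
                wstar hint hXi (hs (-1) (or_intror erefl))).
  have fin0 : Iw w0 \is a fin_num.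
    by rewrite ge0_fin_numE //; exact: le_lt_trans le0 hint.
  have lt_reg : lambda / 2 * \sum_(j < d) w0 j ^+ 2 <
                lambda / 2 * \sum_(j < d) wstar j ^+ 2.
    rewrite [in X in _ < X](bigD1 i) //= [in X in X < _](bigD1 i) //=.
    rewrite /w0 eqxx.
    rewrite (eq_bigr (fun j => wstar j ^+ 2)); last first.
      by move=> j /negbTE ->.
    have wp : 0 < wstar i ^+ 2 by rewrite lt_def sqr_ge0 andbT sqrf_eq0.
    rewrite ltr_pM2l; last by apply: divr_gt0.
    by rewrite expr2 mul0r add0r ltrDr.
  have := hmin w0.
  rewrite /hinge_objective leNgt => /negP; apply.
  rewrite (addeC (\int[P]_t _)%E) [X in (_ < X)%E]addeC.
  apply: lte_leD => //.
split.
- move=> /andP [hm1 h1]; rewrite leNgt; apply/negP => wneg.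
  apply: core; first exact: ltr0_neq0.
  by move=> c [->|->]; nra.
- move=> /andP [h1 hm1]; rewrite leNgt; apply/negP => wpos.
  apply: core; first exact: lt0r_neq0.
  by move=> c [->|->]; nra.
Qed.
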